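(* Let $\mathcal{A}=\{A_i\}_{i=0}^p$ be a set of $n\times n$ matrices and let $P_{\mathcal{A}}(\lambda)=\sum_{i=0}^{p}\lambda^i A_i$. Let $(\lambda_j,x_j)$, $j=1,\dots,n$, be $n$ eigenpairs of $P_{\mathcal{A}}(\lambda)$, and put $X=[x_1,\dots,x_n]$, $T=\operatorname{diag}(\lambda_1,\dots,\lambda_n)$. Assume that $X$ is nonsingular and that the geometric multiplicity of each of $\lambda_1,\dots,\lambda_n$ (as an eigenvalue of $P_{\mathcal{A}}$) equals one. If $(\tau_n,W)$ solves the GJBD problem of $\mathcal{A}$, then there exist a permutation matrix $\Pi$ and a nonsingular matrix $D\in\mathbb{D}_{\tau_n}$ such that $WD=X\Pi$; i.e., $(\tau_n,X\Pi)$ also solves the GJBD problem (in particular $(X\Pi)^{\star}A_i(X\Pi)\in\mathbb{D}_{\tau_n}$ for all $i=0,\dots,p$).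
   Context: A partition of a positive integer $n$ is a tuple $\tau_n=(n_1,\dots,n_t)$ of positive integers with $\sum_i n_i=n$; its cardinality is $\operatorname{card}(\tau_n)=t$. For an $n\times n$ matrix $A$ partitioned into blocks $A_{jk}$ of size $n_j\times n_k$, $\operatorname{Bdiag}_{\tau_n}(A)=\operatorname{diag}(A_{11},\dots,A_{tt})$ and $\operatorname{OffBdiag}_{\tau_n}(A)=A-\operatorname{Bdiag}_{\tau_n}(A)$; $A$ is $\tau_n$-block diagonal if $\operatorname{OffBdiag}_{\tau_n}(A)=0$, and $\mathbb{D}_{\tau_n}$ denotes the set of $\tau_n$-block diagonal matrices. The coefficient matrices $A_i$ all lie in one of $\mathbb{A}_n\in\{$real symmetric, complex Hermitian, $\mathbb{R}^{n\times n}$, $\mathbb{C}^{n\times n}\}$, and diagonalizers are sought in a class $\mathbb{W}_n\in\{$real orthogonal, unitary, real nonsingular, complex nonsingular $n\times n$ matrices$\}$; $(\cdot)^{\star}$ denotes transpose for real matrices and conjugate transpose for complex matrices. The JBD problem for a partition $\tau_n$: find $W\in\mathbb{W}_n$ with $W^{\star}A_iW\in\mathbb{D}_{\tau_n}$ for all $i=0,\dots,p$. The GJBD problem: find a partition $\tau_n'$ and $W=W(\tau_n')\in\mathbb{W}_n$ solving the JBD problem for $\tau_n'$ such that $\operatorname{card}(\tau_n')$ is maximal among all partitions for which the JBD problem is solvable; such a pair $(\tau_n',W)$ is called a solution of the GJBD problem. An eigenpair $(\lambda,x)$ of $P(\lambda)$ satisfies $\det P(\lambda)=0$, $x\neq 0$,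 $P(\lambda)x=0$; the geometric multiplicity of $\lambda$ is $\dim\ker P(\lambda)$. *)

(* Defs.v *)
(* Matrices over a numeric algebraically closed field C
   (e.g. algC, or complex R); real matrices are those with real entries. *)
From HB Require Import structures.
From mathcomp Require Import all_boot all_order all_algebra all_fingroup.
Set Implicit Arguments. Unset Strict Implicit. Unset Printing Implicit Defensive.
Import Order.TTheory GRing.Theory Num.Theory.
Local Open Scope ring_scope.

Section Defs.
Variable C : numClosedFieldType.

Definition ctrans (m k : nat) (A : 'M[C]_(m, k)) : 'M[C]_(k, m) :=
  map_mx Num.conj A^T.

Definition real_mx (m k : nat) (A : 'M[C]_(m, k)) : Prop :=
  forall i j, A i j \is Num.real.

Definition is_partition (n : nat) (tau : seq nat) : Prop :=
  all (fun k => 0 < k)%N tau /\ sumn tau = n.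

(* index (0-based) of the block containing row/column i *)
Definition blk (tau : seq nat) (i : nat) : nat :=
  count (fun k => sumn (take k.+1 tau) <= i)%N (iota 0 (size tau)).

Definition bdiag (n : nat) (tau : seq nat) (A : 'M[C]_n) : Prop :=
  forall i j : 'I_n, blk tau i <> blk tau j -> A i j = 0.

Inductive Aclass := RealSym | Hermitian | RealGen | ComplexGen.
Inductive Wclass := RealOrth | Unitary | RealNonsing | ComplexNonsing.

Definition inA (c : Aclass) (n : nat) (A : 'M[C]_n) : Prop :=
  match c with
  | RealSym => real_mx A /\ A^T = A
  | Hermitian => ctrans A = A
  | RealGen => real_mx A
  | ComplexGen => True
  end.

Definition inW (c : Wclass) (n : nat) (W : 'M[C]_n) : Prop :=
  match c with
  | RealOrth => real_mx W /\ W^T *m W = 1%:M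
  | Unitary => ctrans W *m W = 1%:M
  | RealNonsing => real_mx W /\ W \in unitmx
  | ComplexNonsing => W \in unitmx
  end.

Definition JBD_sol (cw : Wclass) (n p : nat) (A : 'I_p.+1 -> 'M[C]_n)
  (tau : seq nat) (W : 'M[C]_n) : Prop :=
  inW cw W /\ forall i, bdiag tau (ctrans W *m A i *m W).

Definition GJBD_sol (cw : Wclass) (n p : nat) (A : 'I_p.+1 -> 'M[C]_n)
  (tau : seq nat) (W : 'M[C]_n) : Prop :=
  [/\ is_partition n tau, JBD_sol cw A tau W &
      forall tau', is_partition n tau' -> (exists W', JBD_sol cw A tau' W') ->
        (size tau' <= size tau)%N].

Definition Pmat (n p : nat) (A : 'I_p.+1 -> 'M[C]_n) (lam : C) : 'M[C]_n :=
  \sum_(i < p.+1) lam ^+ i *: A i.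

Definition eigenpair (n p : nat) (A : 'I_p.+1 -> 'M[C]_n) (lam : C)
  (x : 'cV[C]_n) : Prop :=
  [/\ \det (Pmat A lam) = 0, x != 0 & Pmat A lam *m x = 0].

(* dim ker P(lam): the column space of cokermx M is {v | M v = 0} *)
Definition geom_mult (n p : nat) (A : 'I_p.+1 -> 'M[C]_n) (lam : C) : nat :=
  \rank (cokermx (Pmat A lam)).

Definition is_perm_matrix (n : nat) (Pi : 'M[C]_n) : Prop :=
  exists s : 'S_n, Pi = perm_mx s.

End Defs.

(* Main.v *)
Require Import Defs.
From HB Require Import structures.
From mathcomp Require Import all_boot all_order all_algebra all_fingroup.
Import Order.TTheory GRing.Theory Num.Theory.
Local Open Scope ring_scope.

Set Implicit Arguments.
Section Helpers.
Variable C : numClosedFieldType.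

Lemma ord2_cases (a : 'I_2) : a = 0 \/ a = 1.
Proof. by case: a => [[|[|//]]] h; [left|right]; apply: val_inj. Qed.

Lemma bdiag_mul n tau (A B : 'M[C]_n) :
  bdiag tau A -> bdiag tau B -> bdiag tau (A *m B).
Proof.
move=> hA hB i j hij; rewrite mxE; apply: big1 => k _.
case: (eqVneq (blk tau k) (blk tau i)) => hk.
  by rewrite hB ?mulr0 // hk.
by rewrite hA ?mul0r // => e; rewrite e eqxx in hk.
Qed.

Lemma bdiag_ctrans n tau (A : 'M[C]_n) : bdiag tau A -> bdiag tau (ctrans A).
Proof.
move=> hA i j hij; rewrite /ctrans !mxE hA ?rmorph0 //.
by move=> e; apply: hij.
Qed.

Lemma ctransM n (A B : 'M[C]_n) : ctrans (A *m B) = ctrans B *m ctrans A.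
Proof. by rewrite /ctrans trmx_mul map_mxM. Qed.

Lemma ctrans_unit n (A : 'M[C]_n) : A \in unitmx -> ctrans A \in unitmx.
Proof. by move=> hA; rewrite /ctrans map_unitmx unitmx_tr. Qed.

Lemma rank_unit_l n (U A : 'M[C]_n) : U \in unitmx -> \rank (U *m A) = \rank A.
Proof.
move=> hU; rewrite -mxrank_tr trmx_mul mxrankMfree ?mxrank_tr //.
by rewrite row_free_unit unitmx_tr.
Qed.

Lemma key n tau (M : 'M[C]_n) (y : 'cV[C]_n) :
  bdiag tau M -> M *m y = 0 -> (n - \rank M <= 1)%N ->
  forall i i', y i 0 != 0 -> y i' 0 != 0 -> blk tau i = blk tau i'.
Proof.
move=> hM hy hr i i' yi yi'.
case: (eqVneq (blk tau i) (blk tau i')) => // hne; exfalso.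
pose v (b : nat) : 'cV[C]_n := \col_k (if blk tau k == b then y k 0 else 0).
have vker b : M *m v b = 0.
  apply/matrixP => r c; rewrite ord1 !mxE.
  have -> : \sum_k M r k * v b k 0 =
            \sum_k (if blk tau r == b then M r k * y k 0 else 0).
    apply: eq_bigr => k _; rewrite mxE.
    case: (eqVneq (blk tau k) b) => hk; case: (eqVneq (blk tau r) b) => hr' //.
    - by rewrite hM ?mul0r // hk => e; rewrite e eqxx in hr'.
    - by rewrite hM ?mul0r // hr' => e; rewrite -e eqxx in hk.
    - by rewrite mulr0.
  case: (blk tau r == b); last by rewrite big1.
  by move/matrixP: hy => /(_ r 0); rewrite !mxE.
pose K : 'M[C]_(2, n) := \matrix_(a < 2, k < n)
   (if a == 0 then v (blk tau i) k 0 else v (blk tau i') k 0).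
have hK : K *m M^T = 0.
  apply/matrixP => a c; rewrite [RHS]mxE mxE.
  have := vker (if a == 0 then blk tau i else blk tau i').
  move/matrixP => /(_ c 0); rewrite [RHS]mxE mxE => h.
  apply: etrans h.
  apply: eq_bigr => k _; rewrite /K !mxE mulrC; by case: (a == 0).
have h1 : (\rank K <= 1)%N.
  apply: leq_trans hr.
  rewrite -(mxrank_tr M) -mxrank_ker; apply: mxrankS; exact/sub_kermxP.
pose S : 'M[C]_(n, 2) := \matrix_(k < n, l < 2)
   (if l == 0 then (k == i)%:R else (k == i')%:R).
have hKS : K *m S = diag_mx (\row_(l < 2) (if l == 0 then y i 0 else y i' 0)).
  apply/matrixP => a l; rewrite !mxE.
  rewrite (bigD1 (if l == 0 then i else i')) //= big1; last first.
    move=> k hk; rewrite !mxE; case: (l == 0) hk => /negPf -> ; by rewrite mulr0.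
  rewrite addr0 !mxE.
  case: (ord2_cases a) => -> ; case: (ord2_cases l) => -> /=; rewrite !eqxx ?mulr1 ?mulr1n ?mulr0n //.
  - by rewrite eq_sym (negPf hne).
  - by rewrite (negPf hne).
have h2 : (2 <= \rank K)%N.
  rewrite -{1}(mxrank_unit (A := K *m S)) ?mxrankM_maxl //.
  rewrite hKS unitmxE det_diag unitfE; apply/prodf_neq0 => l _.
  by rewrite mxE; case: (l == 0).
by have := leq_trans h2 h1.
Qed.

End Helpers.
Unset Implicit Arguments.

Theorem theorem3p1 (C : numClosedFieldType) (ca : Aclass) (cw : Wclass)
  (n p : nat) (A : 'I_p.+1 -> 'M[C]_n)
  (lam : 'I_n -> C) (x : 'I_n -> 'cV[C]_n)
  (tau : seq nat) (W : 'M[C]_n) :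
  (forall i, inA ca (A i)) ->
  (forall j, eigenpair A (lam j) (x j)) ->
  let X := \matrix_(r < n, j < n) x j r 0 in
  X \in unitmx ->
  (forall j, geom_mult A (lam j) = 1%N) ->
  GJBD_sol cw A tau W ->
  exists Pi : 'M[C]_n, exists D : 'M[C]_n,
    [/\ is_perm_matrix Pi, bdiag tau D, D \in unitmx,
        W *m D = X *m Pi &
        forall i, bdiag tau (ctrans (X *m Pi) *m A i *m (X *m Pi))].
Proof.
move=> hA heig X hX hgm [hpart [hW hJ] _].
have Wu : W \in unitmx.
  by case: cw hW => /= [[_ /mulmx1_unit [_ ->]]|/mulmx1_unit [_ ->]|[]|].
pose Y := invmx W *m X.
have Yu : Y \in unitmx by rewrite unitmx_mul unitmx_inv Wu hX.
have colX j : col j X = x j by apply/matrixP => r c; rewrite ord1 !mxE.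
have supp j : forall i i', Y i j != 0 -> Y i' j != 0 -> blk tau i = blk tau i'.
  move=> i i'; pose M := ctrans W *m Pmat A (lam j) *m W.
  have hM : bdiag tau M.
    move=> r c hrc; rewrite /M /Pmat mulmx_sumr mulmx_suml summxE big1 // => k _.
    by rewrite -scalemxAr -scalemxAl mxE hJ ?mulr0.
  have hy : M *m col j Y = 0.
    have [_ _ hP] := heig j.
    rewrite /Y colE -mulmxA -colE colX /M -!mulmxA (mulmxA W) mulmxV // mul1mx hP.
    by rewrite !mulmx0.
  have hr : (n - \rank M <= 1)%N.
    rewrite /M mxrankMfree ?row_free_unit // rank_unit_l ?ctrans_unit //.
    by rewrite -mxrank_coker; have := hgm j; rewrite /geom_mult => ->.
  move=> hi hi'; apply: (key hM hy hr i i'); by rewrite mxE.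
have [s hs] : exists s : 'S_n, \prod_i Y i (s i) != 0.
  case/boolP: [exists s : 'S_n, \prod_i Y i (s i) != 0] => [/existsP //|/existsPn hs].
  exfalso; move: Yu; rewrite unitmxE unitfE /determinant big1 ?eqxx // => t _.
  by move: (hs t); rewrite negbK => /eqP ->; rewrite mulr0.
pose Pi : 'M[C]_n := perm_mx s^-1.
pose D := Y *m Pi.
have hD : bdiag tau D.
  move=> i k hik; rewrite /D /Pi -col_permE mxE.
  apply/eqP; apply/negPn/negP => hnz; apply: hik; apply: (supp (s k)) => //.
  by move/prodf_neq0: hs; apply.
have eWD : X *m Pi = W *m D.
  by rewrite /D /Y !mulmxA mulmxV // mul1mx.
exists Pi, D; split => //.
- by exists (s^-1)%g.
- by rewrite unitmx_mul Yu unitmx_perm.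
- move=> i; rewrite eWD.
  have -> : ctrans (W *m D) *m A i *m (W *m D) =
            ctrans D *m (ctrans W *m A i *m W) *m D by rewrite ctransM !mulmxA.
  exact: bdiag_mul (bdiag_mul (bdiag_ctrans hD) (hJ i)) hD.
Qed.
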